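(* Assume the setting and Algorithm 2 described in the context, with $|Q|\ge2$, and suppose $L$ is convex. Take $n_1=\Theta(\frac{M^2}{\varepsilon_1^2}\log|Q|)$ and $n_2=\Theta\big(\frac{M^2}{\varepsilon_1^2\varepsilon_2^2}\log|Q|\log(\frac{M\log|Q|}{\varepsilon_1\varepsilon_2})\big)$, with suitable absolute constants. Then with probability at least $14/15$: if Algorithm 2 outputs a distribution $\mu'_D$ during the outer iteration with value $\ell$, then $\mathrm{Loss}(\mu'_D)\le\ell+\frac{2\varepsilon_1}{3}$.
   Context: Setting. $X$ is a countable set and $p$ is a probability distribution on $X$. For a distribution $q$ on $X$, $q_x$ is the mass of $x$ and $\mathrm{supp}(q)=\{x:q_x>0\}$. An invalidity function $\mathrm{Inv}:X\to\{0,1\}$ is given with $\mathrm{Inv}(x)=0$ for all $x\in\mathrm{supp}(p)$. For a distribution $q$, $\mathrm{Inv}(q)=\mathbb{E}_{x\sim q}[\mathrm{Inv}(x)]$. Fix $M>0$ and a monotone non-increasing function $L:[0,1]\to[0,M]$, and set $\mathrm{Loss}(q)=\mathbb{E}_{x\sim p}[L(q_x)]$. The learner may draw i.i.d. samples from $p$ and may query $\mathrm{Inv}(x)$ at any point. $Q$ is a finite family of probability distributions on $X$. A fixed point $x^*$ with $\mathrm{Inv}(x^* )=0$ is available. Algorithm 2 (parameters $\varepsilon_1,\varepsilon_2,\alpha,n_1,n_2$): (1) Draw $n_1$ i.i.d. samples from $p$. For every $q\in Q$ let $\overline{\mathrm{Loss}}(q)$ be the average of $L(q_x)$ over these samples.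 (2) For $\ell=0,\varepsilon_1/3,2\varepsilon_1/3,\dots$ (the multiples of $\varepsilon_1/3$ in $[0,M]$, in increasing order): (a) Set $D=\{q\in Q:\overline{\mathrm{Loss}}(q)\le\ell\}$. (b) While $D\neq\emptyset$: - Let $\mu_D=\frac1{|D|}\sum_{q\in D}q$. - Let $w_D(x)=\Pr_{q\sim\mathrm{Unif}(D)}[\varepsilon_1 q_x<3M\mu_D(x)]$. - Draw $n_2$ i.i.d. samples $x_1,\dots,x_{n_2}$ from $\mu_D$ and query their invalidity. - If $\frac1{n_2}\sum_{i}\mathrm{Inv}(x_i)w_D(x_i)\le\alpha+\frac{4\varepsilon_2}{5}$, output $\mu'_D$ and stop. Here $\mu'_D$ draws $x\sim\mu_D$, returns $x$ with probability $w_D(x)$, and returns $x^*$ otherwise. - Otherwise, remove from $D$ every $q$ with $\frac1{n_2}\sum_i\mathrm{Inv}(x_i)\frac{q_{x_i}}{\mu_D(x_i)}\mathbb{I}[\varepsilon_1q_{x_i}<3M\mu_D(x_i)]>\alpha+\frac{\varepsilon_2}{5}$. *)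

(* Defs.v *)
From Stdlib Require Import Reals Lra Lia List ZArith ClassicalEpsilon.
Open Scope R_scope.

(* The countable ground set X is modelled by nat.
   A (probability) distribution on X is a function nat -> R. *)
Definition is_dist (q : nat -> R) : Prop :=
  (forall x, 0 <= q x) /\ infinite_sum q 1.

(* Expectation of f under q : the value of the series sum_x q x * f x
   (chosen by classical choice; all series used below converge). *)
Definition Ex (q : nat -> R) (f : nat -> R) : R :=
  epsilon (inhabits 0) (fun s => infinite_sum (fun x => q x * f x) s).

(* Expectation of F over n i.i.d. samples drawn from q. *)
Fixpoint ExN (q : nat -> R) (n : nat) (F : list nat -> R) : R :=
  match n with
  | O => F nil
  | S m => Ex q (fun x => ExN q m (fun xs => F (x :: xs)))
  end.

Definition rsum (l : list R) : R := fold_right Rplus 0 l.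

Definition emp_avg (xs : list nat) (g : nat -> R) : R :=
  rsum (map g xs) / INR (length xs).

Definition indR (b : bool) : R := if b then 1 else 0.
Definition ltR (a b : R) : R := if Rlt_dec a b then 1 else 0.

Definition Loss (p : nat -> R) (L : R -> R) (q : nat -> R) : R :=
  Ex p (fun x => L (q x)).

Definition mu (D : list (nat -> R)) (x : nat) : R :=
  rsum (map (fun q => q x) D) / INR (length D).

Definition wD (eps1 M : R) (D : list (nat -> R)) (x : nat) : R :=
  rsum (map (fun q => ltR (eps1 * q x) (3 * M * mu D x)) D) / INR (length D).

(* mu'_D : draw x ~ mu_D, keep it with probability w_D(x), else return xstar *)
Definition mu' (eps1 M : R) (D : list (nat -> R)) (xstar : nat) (x : nat) : R :=
  mu D x * wD eps1 M D x
  + (if Nat.eq_dec x xstar then Ex (mu D) (fun y => 1 - wD eps1 M D y) else 0).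

Definition test_stat (Inv : nat -> bool) (eps1 M : R) (D : list (nat -> R))
  (xs : list nat) : R :=
  emp_avg xs (fun x => indR (Inv x) * wD eps1 M D x).

Definition score (Inv : nat -> bool) (eps1 M : R) (D : list (nat -> R))
  (xs : list nat) (q : nat -> R) : R :=
  emp_avg xs (fun x => indR (Inv x) * (q x / mu D x)
                       * ltR (eps1 * q x) (3 * M * mu D x)).

Definition remove_step (Inv : nat -> bool) (eps1 eps2 alpha M : R)
  (D : list (nat -> R)) (xs : list nat) : list (nat -> R) :=
  filter (fun q => if Rle_dec (score Inv eps1 M D xs q) (alpha + eps2 / 5)
                   then true else false) D.

Definition bad_output (p : nat -> R) (L : R -> R) (eps1 M : R)
  (D : list (nat -> R)) (xstar : nat) (l : R) : R :=
  ltR (l + 2 * eps1 / 3) (Loss p L (mu' eps1 M D xstar)).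

(* Probability that the while-loop (2b) run on D within outer iteration l,
   followed (if D becomes empty) by the remaining outer iterations whose
   bad-probability is [rest], produces a bad output, truncated after [fuel]
   while-iterations (non-terminated runs count as not bad). *)
Fixpoint pbad_inner (p : nat -> R) (Inv : nat -> bool) (L : R -> R)
  (xstar : nat) (eps1 eps2 alpha M : R) (n2 : nat)
  (fuel : nat) (l : R) (D : list (nat -> R)) (rest : R) : R :=
  match fuel with
  | O => 0
  | S f =>
    match D with
    | nil => rest
    | _ :: _ =>
      ExN (mu D) n2 (fun xs =>
        if Rle_dec (test_stat Inv eps1 M D xs) (alpha + 4 * eps2 / 5)
        then bad_output p L eps1 M D xstar l
        else pbad_inner p Inv L xstar eps1 eps2 alpha M n2 f l
               (remove_step Inv eps1 eps2 alpha M D xs) rest)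
    end
  end.

Definition emp_loss (L : R -> R) (s1 : list nat) (q : nat -> R) : R :=
  emp_avg s1 (fun x => L (q x)).

Definition levels (eps1 M : R) : list R :=
  map (fun j => INR j * eps1 / 3)
      (seq 0 (S (Z.to_nat (Int_part (3 * M / eps1))))).

Fixpoint pbad_outer (p : nat -> R) (Inv : nat -> bool) (L : R -> R)
  (Q : list (nat -> R)) (xstar : nat) (eps1 eps2 alpha M : R) (n2 : nat)
  (fuel : nat) (s1 : list nat) (ls : list R) : R :=
  match ls with
  | nil => 0
  | l :: ls' =>
    pbad_inner p Inv L xstar eps1 eps2 alpha M n2 fuel l
      (filter (fun q => if Rle_dec (emp_loss L s1 q) l then true else false) Q)
      (pbad_outer p Inv L Q xstar eps1 eps2 alpha M n2 fuel s1 ls')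
  end.

(* Probability (truncated at [fuel] while-iterations per outer iteration)
   that Algorithm 2 outputs some mu'_D during the outer iteration with value l
   and Loss(mu'_D) > l + 2 eps1/3.  Monotone in fuel; its supremum over fuel
   is the exact probability of this event. *)
Definition prob_bad (p : nat -> R) (Inv : nat -> bool) (L : R -> R)
  (Q : list (nat -> R)) (xstar : nat) (eps1 eps2 alpha M : R) (n1 n2 : nat)
  (fuel : nat) : R :=
  ExN p n1 (fun s1 =>
    pbad_outer p Inv L Q xstar eps1 eps2 alpha M n2 fuel s1 (levels eps1 M)).

Definition nonincreasing01 (L : R -> R) : Prop :=
  forall x y, 0 <= x -> x <= y -> y <= 1 -> L y <= L x.

Definition convex01 (L : R -> R) : Prop :=
  forall x y t, 0 <= x <= 1 -> 0 <= y <= 1 -> 0 <= t <= 1 ->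
    L (t * x + (1 - t) * y) <= t * L x + (1 - t) * L y.

Definition ceilN (r : R) : nat := Z.to_nat (up r).

(* Main.v *)
Require Import Defs.
From Stdlib Require Import Reals Lra Lia List ZArith Classical ClassicalEpsilon FunctionalExtensionality.
Open Scope R_scope.

Lemma Rabs_le_inv a b : Rabs a <= b -> -b <= a <= b.
Proof. intros H. unfold Rabs in H; destruct (Rcase_abs a); lra. Qed.

Lemma cv_ext (u v : nat -> R) l : (forall n, u n = v n) -> Un_cv u l -> Un_cv v l.
Proof. intros H; replace v with u; auto. apply functional_extensionality; auto. Qed.

Lemma is_sum_ext (u v : nat -> R) l : (forall n, u n = v n) -> infinite_sum u l -> infinite_sum v l.
Proof. intros H; replace v with u; auto. apply functional_extensionality; auto. Qed.

Lemma is_sum_scal u l c : infinite_sum u l -> infinite_sum (fun n => u n * c) (l * c).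
Proof.
  intros H. unfold infinite_sum in *.
  change (Un_cv (sum_f_R0 (fun n => u n * c)) (l*c)).
  apply cv_ext with (u := fun n => sum_f_R0 u n * c).
  { intros n. rewrite Rmult_comm, scal_sum. reflexivity. }
  apply CV_mult; [exact H|]. intros e he; exists 0%nat; intros; unfold Rdist; rewrite Rminus_diag, Rabs_R0; lra.
Qed.

Lemma is_sum_plus u v a b : infinite_sum u a -> infinite_sum v b -> infinite_sum (fun n => u n + v n) (a + b).
Proof.
  intros Hu Hv. change (Un_cv (sum_f_R0 (fun n => u n + v n)) (a+b)).
  apply cv_ext with (u := fun n => sum_f_R0 u n + sum_f_R0 v n).
  { intros n. rewrite sum_plus. reflexivity. }
  apply CV_plus; assumption.
Qed.

Lemma is_sum_minus u v a b : infinite_sum u a -> infinite_sum v b -> infinite_sum (fun n => u n - v n) (a - b).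
Proof.
  intros Hu Hv. change (Un_cv (sum_f_R0 (fun n => u n - v n)) (a-b)).
  apply cv_ext with (u := fun n => sum_f_R0 u n - sum_f_R0 v n).
  { intros n. rewrite minus_sum. reflexivity. }
  apply CV_minus; assumption.
Qed.

Lemma is_sum_le u v a b : (forall n, u n <= v n) -> infinite_sum u a -> infinite_sum v b -> a <= b.
Proof.
  intros H Hu Hv. eapply (Rle_cv_lim (Un := sum_f_R0 u) (Vn := sum_f_R0 v)); eauto.
  intros n. apply sum_Rle. intros; auto.
Qed.

Lemma is_sum_term u a k : (forall n, 0 <= u n) -> infinite_sum u a -> u k <= a.
Proof.
  intros H Hu. apply Rle_trans with (sum_f_R0 u k).
  - destruct k. simpl; lra. simpl. assert (0 <= sum_f_R0 u k).
    { apply cond_pos_sum; auto. } lra.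
  - apply sum_incr; auto.
Qed.

Lemma is_sum_nonneg u a : (forall n, 0 <= u n) -> infinite_sum u a -> 0 <= a.
Proof. intros H Hu. apply Rle_trans with (u 0%nat); auto. apply is_sum_term; auto. Qed.

Lemma dist_le1 q x : is_dist q -> 0 <= q x <= 1.
Proof. intros [H1 H2]. split; auto. apply is_sum_term; auto. Qed.

Lemma Ex_spec q f B : is_dist q -> (forall x, Rabs (f x) <= B) ->
  infinite_sum (fun x => q x * f x) (Ex q f).
Proof.
  intros [Hq0 Hq1] Hf.
  assert (HB : 0 <= B) by (eapply Rle_trans; [apply Rabs_pos|apply (Hf 0%nat)]).
  assert (Ex1 : exists s, infinite_sum (fun x => q x * f x) s).
  { destruct (Rseries_CV_comp (fun x => q x * (f x + B)) (fun x => q x * (2 * B))) as [l Hl].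
    - intros n. specialize (Hf n). apply Rabs_le_inv in Hf. split.
      + apply Rmult_le_pos; auto; lra.
      + apply Rmult_le_compat_l; auto; lra.
    - exists (1 * (2*B)). apply (is_sum_scal q 1 (2*B)); auto.
    - exists (l - 1 * B). apply is_sum_ext with (u := fun x => q x * (f x + B) - q x * B).
      { intros; ring. }
      apply is_sum_minus; auto. apply is_sum_scal; auto. }
  unfold Ex. apply (epsilon_spec (inhabits 0) (fun s => infinite_sum (fun x => q x * f x) s)). exact Ex1.
Qed.

Lemma Ex_unique q f B s : is_dist q -> (forall x, Rabs (f x) <= B) ->
  infinite_sum (fun x => q x * f x) s -> Ex q f = s.
Proof. intros Hq Hf Hs. eapply uniqueness_sum; [eapply Ex_spec; eauto| exact Hs]. Qed.

Lemma Ex_const q c : is_dist q -> Ex q (fun _ => c) = c.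
Proof.
  intros Hq. apply Ex_unique with (B := Rabs c); auto. intros; lra.
  pose proof (is_sum_scal q 1 c (proj2 Hq)) as H. rewrite Rmult_1_l in H. exact H.
Qed.

Lemma Ex_zero q : Ex q (fun _ => 0) = 0.
Proof.
  unfold Ex. eapply uniqueness_sum.
  - apply (epsilon_spec (inhabits 0) (fun s => infinite_sum (fun x => q x * 0) s)).
    exists 0. intros e he; exists 0%nat; intros n _. rewrite (sum_eq_R0 _ n) by (intros; ring). unfold Rdist. rewrite Rminus_diag, Rabs_R0; lra.
  - intros e he; exists 0%nat; intros n _. rewrite (sum_eq_R0 _ n) by (intros; ring). unfold Rdist. rewrite Rminus_diag, Rabs_R0; lra.
Qed.

Lemma Ex_le q f g B : is_dist q -> (forall x, Rabs (f x) <= B) -> (forall x, Rabs (g x) <= B) ->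
  (forall x, f x <= g x) -> Ex q f <= Ex q g.
Proof.
  intros Hq Hf Hg H. eapply is_sum_le; [|eapply Ex_spec; eauto|eapply Ex_spec; eauto].
  intros n. apply Rmult_le_compat_l; auto. apply Hq.
Qed.

Lemma Ex_plus q f g B : is_dist q -> (forall x, Rabs (f x) <= B) -> (forall x, Rabs (g x) <= B) ->
  Ex q (fun x => f x + g x) = Ex q f + Ex q g.
Proof.
  intros Hq Hf Hg. apply Ex_unique with (B := B + B).
  auto. intros x. eapply Rle_trans; [apply Rabs_triang|]. specialize (Hf x); specialize (Hg x); lra.
  apply is_sum_ext with (u := fun x => q x * f x + q x * g x). intros; ring.
  apply is_sum_plus; eapply Ex_spec; eauto.
Qed.

Lemma Ex_scal q f c B : is_dist q -> (forall x, Rabs (f x) <= B) ->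
  Ex q (fun x => c * f x) = c * Ex q f.
Proof.
  intros Hq Hf. apply Ex_unique with (B := Rabs c * B). auto.
  intros x. rewrite Rabs_mult. apply Rmult_le_compat_l; auto. apply Rabs_pos.
  apply is_sum_ext with (u := fun x => q x * f x * c). intros; ring.
  rewrite Rmult_comm. apply is_sum_scal; eapply Ex_spec; eauto.
Qed.

Lemma Ex_bound q f B : is_dist q -> (forall x, Rabs (f x) <= B) -> Rabs (Ex q f) <= B.
Proof.
  intros Hq Hf. assert (HB : 0 <= B) by (eapply Rle_trans; [apply Rabs_pos|apply (Hf 0%nat)]).
  apply Rabs_le. split.
  - rewrite <- (Ex_const q (-B)) by auto. apply Ex_le with (B := B); auto.
    intros; rewrite Rabs_Ropp, Rabs_right; lra. intros x; specialize (Hf x); apply Rabs_le_inv in Hf; lra.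
  - rewrite <- (Ex_const q B) by auto. apply Ex_le with (B := B); auto.
    intros; rewrite Rabs_right; lra. intros x; specialize (Hf x); apply Rabs_le_inv in Hf; lra.
Qed.

Definition BdN (n : nat) (F : list nat -> R) (B : R) :=
  forall xs, length xs = n -> Rabs (F xs) <= B.

Lemma BdN_cons n F B x : BdN (S n) F B -> BdN n (fun xs => F (x :: xs)) B.
Proof. intros H xs Hl. apply H. simpl; lia. Qed.

Lemma ExN_bound q n : is_dist q -> forall F B, BdN n F B -> Rabs (ExN q n F) <= B.
Proof.
  intros Hq. induction n; intros F B H; simpl.
  - apply H; reflexivity.
  - apply Ex_bound; auto. intros x. apply IHn. apply BdN_cons; auto.
Qed.

Lemma ExN_le q n : is_dist q -> forall F G B, BdN n F B -> BdN n G B ->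
  (forall xs, length xs = n -> F xs <= G xs) -> ExN q n F <= ExN q n G.
Proof.
  intros Hq. induction n; intros F G B HF HG H; simpl.
  - apply H; reflexivity.
  - apply Ex_le with (B := B); auto.
    + intros x; apply ExN_bound; auto; apply BdN_cons; auto.
    + intros x; apply ExN_bound; auto; apply BdN_cons; auto.
    + intros x. apply IHn with (B := B); try apply BdN_cons; auto.
      intros xs Hl; apply H; simpl; lia.
Qed.

Lemma ExN_ext q n F G : (forall xs, length xs = n -> F xs = G xs) -> ExN q n F = ExN q n G.
Proof.
  revert F G; induction n; intros F G H; simpl.
  - apply H; reflexivity.
  - f_equal. apply functional_extensionality; intros x. apply IHn. intros xs Hl; apply H; simpl; lia.
Qed.

Lemma ExN_plus q n : is_dist q -> forall F G B, BdN n F B -> BdN n G B ->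
  ExN q n (fun xs => F xs + G xs) = ExN q n F + ExN q n G.
Proof.
  intros Hq. induction n; intros F G B HF HG; simpl.
  - reflexivity.
  - rewrite <- Ex_plus with (B := B); auto.
    + f_equal. apply functional_extensionality; intros x.
      apply IHn with (B := B); apply BdN_cons; auto.
    + intros x; apply ExN_bound; auto; apply BdN_cons; auto.
    + intros x; apply ExN_bound; auto; apply BdN_cons; auto.
Qed.

Definition prodl (g : nat -> R) (xs : list nat) : R := fold_right (fun x acc => g x * acc) 1 xs.

Lemma ExN_prod q g Bg : is_dist q -> (forall x, Rabs (g x) <= Bg) ->
  forall n c, ExN q n (fun xs => c * prodl g xs) = c * (Ex q g) ^ n.
Proof.
  intros Hq Hg. induction n; intros c; simpl.
  - ring.
  - transitivity (Ex q (fun x => (c * Ex q g ^ n) * g x)).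
    + f_equal. apply functional_extensionality; intros x.
      rewrite (ExN_ext q n _ (fun xs => (c * g x) * prodl g xs)) by (intros; ring).
      rewrite IHn. ring.
    + rewrite Ex_scal with (B := Bg); auto. ring.
Qed.

Lemma rsum_cons a l : rsum (a :: l) = a + rsum l.
Proof. reflexivity. Qed.
Lemma rsum_nil : rsum nil = 0.
Proof. reflexivity. Qed.
Ltac sm := cbn [map length]; rewrite ?rsum_cons, ?rsum_nil.

Lemma rsum_le {A} (l : list A) f g : (forall a, In a l -> f a <= g a) ->
  rsum (map f l) <= rsum (map g l).
Proof.
  induction l; sm; intros H; [right; reflexivity|].
  pose proof (H a (or_introl eq_refl)). assert (rsum (map f l) <= rsum (map g l)) by (apply IHl; intros; apply H; simpl; auto). lra.
Qed.

Lemma rsum_lin {A} (l : list A) f a b :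
  rsum (map (fun q => a * f q + b) l) = a * rsum (map f l) + b * INR (length l).
Proof.
  induction l; sm. simpl; ring. rewrite IHl. rewrite S_INR. ring.
Qed.

Lemma rsum_plus {A} (l : list A) f g :
  rsum (map (fun q => f q + g q) l) = rsum (map f l) + rsum (map g l).
Proof. induction l; sm. simpl; ring. rewrite IHl. ring. Qed.

Lemma rsum_const {A} (l : list A) c : rsum (map (fun _ => c) l) = c * INR (length l).
Proof. induction l; sm. simpl; ring. rewrite IHl, S_INR. ring. Qed.

Lemma rsum_bounds {A} (l : list A) f lo hi : (forall a, In a l -> lo <= f a <= hi) ->
  lo * INR (length l) <= rsum (map f l) <= hi * INR (length l).
Proof.
  intros H. split.
  - rewrite <- rsum_const. apply rsum_le. intros a Ha; apply H; auto.
  - rewrite <- rsum_const. apply rsum_le. intros a Ha; apply H; auto.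
Qed.

Lemma rsum_abs {A} (l : list A) f B : (forall a, In a l -> Rabs (f a) <= B) ->
  Rabs (rsum (map f l)) <= B * INR (length l).
Proof.
  intros H. apply Rabs_le. pose proof (rsum_bounds l f (-B) B).
  assert (forall a, In a l -> -B <= f a <= B) by (intros a Ha; apply Rabs_le_inv; auto).
  specialize (H0 H1). lra.
Qed.

Lemma Ex_rsum {A} q (l : list A) (F : A -> nat -> R) B : is_dist q ->
  (forall a x, In a l -> Rabs (F a x) <= B) ->
  Ex q (fun x => rsum (map (fun a => F a x) l)) = rsum (map (fun a => Ex q (F a)) l).
Proof.
  intros Hq. induction l; intros H; sm.
  - apply Ex_const; auto.
  - assert (HB : 0 <= B) by (eapply Rle_trans; [apply Rabs_pos|apply (H a 0%nat (or_introl eq_refl))]).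
    transitivity (Ex q (fun x => F a x + rsum (map (fun a0 => F a0 x) l))); [reflexivity|].
    rewrite (Ex_plus q (F a) (fun x => rsum (map (fun a0 => F a0 x) l)) (B * INR (S (length l)))); auto.
    + rewrite IHl; auto. intros; apply H; simpl; auto.
    + intros x. eapply Rle_trans; [apply (H a x (or_introl eq_refl))|].
      rewrite S_INR. pose proof (pos_INR (length l)). nra.
    + intros x. eapply Rle_trans. apply rsum_abs with (B := B). intros; apply H; simpl; auto.
      rewrite S_INR. lra.
Qed.

Lemma ExN_rsum {A} q n (l : list A) (F : A -> list nat -> R) B : is_dist q ->
  (forall a, In a l -> BdN n (F a) B) ->
  ExN q n (fun xs => rsum (map (fun a => F a xs) l)) = rsum (map (fun a => ExN q n (F a)) l).
Proof.
  intros Hq. induction l; intros H; sm.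
  - clear H. induction n; simpl. reflexivity. rewrite IHn. apply Ex_const; auto.
  - transitivity (ExN q n (fun xs => F a xs + rsum (map (fun a0 => F a0 xs) l))); [reflexivity|].
    rewrite (ExN_plus q n Hq (F a) (fun xs => rsum (map (fun a0 => F a0 xs) l)) (B * INR (S (length l)))); auto.
    + rewrite IHl; auto. intros; apply H; simpl; auto.
    + intros xs Hl. eapply Rle_trans; [apply (H a (or_introl eq_refl)); auto|].
      assert (0 <= B) by (eapply Rle_trans; [apply Rabs_pos|apply (H a (or_introl eq_refl) xs Hl)]).
      rewrite S_INR. pose proof (pos_INR (length l)). nra.
    + intros xs Hl. eapply Rle_trans. apply rsum_abs with (B := B). intros; apply H; simpl; auto.
      rewrite S_INR. assert (0 <= B).
      { destruct l. simpl. eapply Rle_trans; [apply Rabs_pos|apply (H a (or_introl eq_refl) xs Hl)].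
        eapply Rle_trans; [apply Rabs_pos|apply (H a (or_introl eq_refl) xs Hl)]. }
      lra.
Qed.

Lemma jensen (L : R -> R) : convex01 L -> forall a : list R, a <> nil ->
  (forall t, In t a -> 0 <= t <= 1) ->
  L (rsum a / INR (length a)) <= rsum (map L a) / INR (length a).
Proof.
  intros HL a. induction a as [|x a IH]; intros Hne H; [congruence|].
  destruct a as [|y a'].
  - simpl. replace ((x + 0) / 1) with x by field. lra.
  - set (a := y :: a') in *.
    assert (Hk : 1 <= INR (length a)).
    { unfold a; simpl length. rewrite S_INR. pose proof (pos_INR (length a')). lra. }
    assert (IH' : L (rsum a / INR (length a)) <= rsum (map L a) / INR (length a)).
    { apply IH. unfold a; congruence. intros; apply H; simpl; auto. }
    assert (Hs := rsum_bounds a (fun t => t) 0 1). rewrite map_id in Hs.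
    assert (Hs' : 0 * INR (length a) <= rsum a <= 1 * INR (length a)) by (apply Hs; intros; apply H; simpl; auto).
    set (k := INR (length a)) in *.
    change (rsum (x :: a)) with (x + rsum a).
    change (rsum (map L (x :: a))) with (L x + rsum (map L a)).
    change (length (x :: a)) with (S (length a)). rewrite S_INR. fold k.
    set (t := 1 / (k + 1)).
    replace ((x + rsum a) / (k + 1)) with (t * x + (1 - t) * (rsum a / k)) by (unfold t; field; lra).
    eapply Rle_trans. apply HL.
    + apply H; simpl; auto.
    + split. apply Rmult_le_pos. lra. left; apply Rinv_0_lt_compat; lra.
      apply Rmult_le_reg_r with k. lra. unfold Rdiv. rewrite Rmult_assoc, Rinv_l by lra. lra.
    + unfold t; split. apply Rmult_le_pos; [lra|left; apply Rinv_0_lt_compat; lra].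
      apply Rmult_le_reg_r with (k+1). lra. unfold Rdiv. rewrite Rmult_assoc, Rinv_l by lra. lra.
    + apply Rle_trans with (t * L x + (1 - t) * (rsum (map L a) / k)).
      * apply Rplus_le_compat_l. apply Rmult_le_compat_l; auto.
        unfold t. apply Rmult_le_reg_r with (k+1). lra. unfold Rdiv. rewrite Rmult_minus_distr_r, Rmult_assoc, Rinv_l by lra. lra.
      * right. unfold t. field. lra.
Qed.

Lemma ltR_01 a b : 0 <= ltR a b <= 1.
Proof. unfold ltR; destruct Rlt_dec; lra. Qed.

Section D.
Variable D : list (nat -> R).
Hypothesis Dne : D <> nil.
Hypothesis Ddist : forall q, In q D -> is_dist q.

Lemma lenD : 1 <= INR (length D).
Proof. destruct D. congruence. simpl length. rewrite S_INR. pose proof (pos_INR (length l)). lra. Qed.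

Lemma frac_bounds (l : list (nat -> R)) (f : (nat -> R) -> R) : l = D ->
  (forall q, In q D -> 0 <= f q <= 1) -> 0 <= rsum (map f l) / INR (length D) <= 1.
Proof.
  intros -> H. pose proof lenD. pose proof (rsum_bounds D f 0 1 H).
  split. apply Rmult_le_pos. lra. left; apply Rinv_0_lt_compat; lra.
  apply Rmult_le_reg_r with (INR (length D)). lra. unfold Rdiv. rewrite Rmult_assoc, Rinv_l by lra. lra.
Qed.

Lemma mu_bounds x : 0 <= mu D x <= 1.
Proof. apply frac_bounds; auto. intros; apply dist_le1; auto. Qed.

Lemma w_bounds e M x : 0 <= wD e M D x <= 1.
Proof. apply frac_bounds; auto. intros; apply ltR_01. Qed.

Lemma sum_dists (l : list (nat -> R)) : (forall q, In q l -> is_dist q) ->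
  infinite_sum (fun x => rsum (map (fun q => q x) l)) (INR (length l)).
Proof.
  induction l; intros H.
  - simpl. intros e he; exists 0%nat; intros n _. rewrite (sum_eq_R0 _ n) by (intros; reflexivity).
    unfold Rdist. rewrite Rminus_diag, Rabs_R0; lra.
  - cbn [length]. rewrite S_INR, Rplus_comm. apply is_sum_plus. apply H; simpl; auto. apply IHl; intros; apply H; simpl; auto.
Qed.

Lemma mu_dist : is_dist (mu D).
Proof.
  split. intros; apply mu_bounds.
  pose proof lenD. pose proof (is_sum_scal _ _ (/ INR (length D)) (sum_dists D Ddist)).
  rewrite Rinv_r in H0 by lra. exact H0.
Qed.

Lemma mu'_bounds e M xs x : mu D x * wD e M D x <= mu' e M D xs x <= 1.
Proof.
  pose proof mu_dist as Hd.
  assert (Hw : forall y, Rabs (wD e M D y) <= 1).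
  { intros y; apply Rabs_le; pose proof (w_bounds e M y); lra. }
  assert (E1 : Ex (mu D) (fun y => 1 - wD e M D y) = 1 - Ex (mu D) (wD e M D)).
  { transitivity (Ex (mu D) (fun y => 1 + (-1) * wD e M D y)).
    f_equal; apply functional_extensionality; intros; ring.
    rewrite (Ex_plus _ (fun _ => 1) (fun y => (-1) * wD e M D y) 1); auto.
    rewrite Ex_const, (Ex_scal _ _ _ 1); auto. ring.
    intros; rewrite Rabs_R1; lra.
    intros y; rewrite Rabs_mult; replace (Rabs (-1)) with 1 by (rewrite Rabs_left; lra); rewrite Rmult_1_l; auto. }
  assert (E2 : mu D x * wD e M D x <= Ex (mu D) (wD e M D)).
  { apply is_sum_term with (u := fun y => mu D y * wD e M D y).
    intros; apply Rmult_le_pos; [apply mu_bounds|apply w_bounds].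
    apply Ex_spec with (B := 1); auto. }
  assert (E3 : Ex (mu D) (wD e M D) <= 1).
  { apply Rle_trans with (Ex (mu D) (fun _ => 1)); [|rewrite Ex_const; auto; lra]. apply Ex_le with (B := 1); auto.
    intros; rewrite Rabs_R1; lra. intros; apply w_bounds. }
  assert (0 <= mu D x * wD e M D x) by (apply Rmult_le_pos; [apply mu_bounds|apply w_bounds]).
  assert (mu D x * wD e M D x <= 1).
  { pose proof (mu_bounds x); pose proof (w_bounds e M x). nra. }
  unfold mu'. destruct Nat.eq_dec; rewrite ?E1; lra.
Qed.

Variables (L : R -> R) (M e1 : R).
Hypothesis HM : 0 < M.
Hypothesis He1 : 0 < e1.
Hypothesis HLb : forall t, 0 <= t <= 1 -> 0 <= L t <= M.
Hypothesis HLd : nonincreasing01 L.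
Hypothesis HLc : convex01 L.

Lemma pointwise xs x :
  L (mu' e1 M D xs x) <= rsum (map (fun q => L (q x)) D) / INR (length D) + e1 / 3.
Proof.
  pose proof lenD as Hn. set (n := INR (length D)) in *.
  pose proof (mu'_bounds e1 M xs x) as Hmu'.
  set (m := mu D x) in *. set (w := wD e1 M D x) in *.
  pose proof (mu_bounds x) as Hm. pose proof (w_bounds e1 M x) as Hw. fold m w in Hm, Hw.
  assert (Hmw : 0 <= m * w <= 1) by nra.
  assert (H1 : L (mu' e1 M D xs x) <= L (m * w)) by (apply HLd; lra).
  assert (Hj : L m <= rsum (map (fun q => L (q x)) D) / n).
  { pose proof (jensen L HLc (map (fun q => q x) D)) as J.
    rewrite length_map, map_map in J. apply J.
    destruct D; simpl; congruence.
    intros t Ht. apply in_map_iff in Ht. destruct Ht as [q [<- Hq]]. apply dist_le1; auto. }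
  destruct (Req_dec m 0) as [Hm0|Hm0].
  - rewrite Hm0, Rmult_0_l in H1. rewrite Hm0 in Hj. lra.
  - assert (Hmp : 0 < m) by lra.
    assert (Hc : 3 * M * (1 - w) <= e1).
    { set (c := 3 * M * m / e1).
      assert (Hsum : rsum (map (fun q => (- c) * ltR (e1 * q x) (3 * M * m) + c) D) <= rsum (map (fun q => q x) D)).
      { apply rsum_le. intros q Hq. pose proof (dist_le1 q x (Ddist q Hq)).
        unfold ltR; destruct Rlt_dec.
        - lra.
        - assert (c <= q x).
          { unfold c. apply Rmult_le_reg_r with e1; auto. unfold Rdiv. rewrite Rmult_assoc, Rinv_l by lra. lra. }
          lra. }
      rewrite rsum_lin in Hsum. fold n in Hsum.
      assert (E1 : rsum (map (fun q => q x) D) = n * m) by (unfold m, mu; fold n; field; lra).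
      assert (E2 : rsum (map (fun q => ltR (e1 * q x) (3 * M * m)) D) = n * w) by (unfold w, wD; fold n m; field; lra).
      rewrite E1, E2 in Hsum.
      assert (c * (1 - w) <= m) by (apply Rmult_le_reg_l with n; lra).
      unfold c in H. apply Rmult_le_reg_r with (m / e1). apply Rdiv_lt_0_compat; lra.
      replace (e1 * (m / e1)) with m by (field; lra). lra. }
    assert (Hc2 : L (w * m + (1 - w) * 0) <= w * L m + (1 - w) * L 0) by (apply HLc; lra).
    replace (w * m + (1 - w) * 0) with (m * w) in Hc2 by ring.
    pose proof (HLb m Hm). assert (0 <= L 0 <= M) by (apply HLb; lra).
    nra.
Qed.

Lemma loss_mu' (p : nat -> R) xs l : is_dist p ->
  (forall q, In q D -> Loss p L q <= l + e1 / 3) ->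
  Loss p L (mu' e1 M D xs) <= l + 2 * e1 / 3.
Proof.
  intros Hp HQ. pose proof lenD as Hn.
  assert (HB : forall q x, In q D -> Rabs (L (q x)) <= M).
  { intros q x Hq. pose proof (HLb _ (dist_le1 q x (Ddist q Hq))). apply Rabs_le; lra. }
  unfold Loss.
  apply Rle_trans with (Ex p (fun x => / INR (length D) * rsum (map (fun q => L (q x)) D) + e1 / 3)).
  - assert (HLm : forall x, 0 <= L (mu' e1 M D xs x) <= M).
    { intros x. pose proof (mu'_bounds e1 M xs x). assert (0 <= mu D x * wD e1 M D x) by (apply Rmult_le_pos; [apply mu_bounds|apply w_bounds]).
      apply HLb; lra. }
    assert (HR : forall x, 0 <= / INR (length D) * rsum (map (fun q => L (q x)) D) <= M).
    { intros x. pose proof (rsum_bounds D (fun q => L (q x)) 0 M) as Hr.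
      assert (Hr' : 0 * INR (length D) <= rsum (map (fun q => L (q x)) D) <= M * INR (length D)).
      { apply Hr. intros q Hq. apply HLb, dist_le1; auto. }
      split. apply Rmult_le_pos. left; apply Rinv_0_lt_compat; lra. lra.
      apply Rmult_le_reg_l with (INR (length D)). lra. rewrite <- Rmult_assoc, Rinv_r by lra. lra. }
    apply Ex_le with (B := M + e1); auto.
    + intros x. specialize (HLm x). apply Rabs_le; lra.
    + intros x. specialize (HR x). apply Rabs_le; lra.
    + intros x. pose proof (pointwise xs x). unfold Rdiv in H. lra.
  - rewrite (Ex_plus p (fun x => / INR (length D) * rsum (map (fun q => L (q x)) D)) (fun _ => e1 / 3) (M * INR (length D) + e1)); auto.
    + rewrite Ex_const by auto.
      rewrite (Ex_scal p (fun x => rsum (map (fun q => L (q x)) D)) _ (M * INR (length D))); auto.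
      * rewrite (Ex_rsum p D (fun q x => L (q x)) M); auto.
        pose proof (rsum_bounds D (fun q => Ex p (fun x => L (q x))) 0 (l + e1 / 3)) as Hr.
        assert (Hr' : rsum (map (fun q => Ex p (fun x => L (q x))) D) <= (l + e1/3) * INR (length D)).
        { apply Hr. intros q Hq. split; [|apply HQ; auto].
          apply Rle_trans with (Ex p (fun _ => 0)). rewrite Ex_const; auto; lra.
          apply Ex_le with (B := M); auto. intros; rewrite Rabs_R0; lra.
          intros; apply HLb, dist_le1; auto. }
        apply Rle_trans with (/ INR (length D) * ((l + e1 / 3) * INR (length D)) + e1 / 3).
        apply Rplus_le_compat_r. apply Rmult_le_compat_l; auto. left; apply Rinv_0_lt_compat; lra.
        right. field. lra.
      * intros x. apply rsum_abs with (B := M). intros q Hq; auto.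
    + intros x. eapply Rle_trans. rewrite Rabs_mult. apply Rmult_le_compat_l. apply Rabs_pos.
      apply rsum_abs with (B := M). intros q Hq; auto.
      rewrite Rabs_right. 2: left; apply Rinv_0_lt_compat; lra.
      replace (/ INR (length D) * (M * INR (length D))) with M by (field; lra). nra.
    + intros x. rewrite Rabs_right by lra. pose proof (pos_INR (length D)). nra.
Qed.
End D.

Lemma ExN_zero q n : ExN q n (fun _ => 0) = 0.
Proof. induction n; simpl. reflexivity. rewrite IHn. apply Ex_zero. Qed.

Lemma ExN_const q n c : is_dist q -> ExN q n (fun _ => c) = c.
Proof. intros Hq; induction n; simpl. reflexivity. rewrite IHn. apply Ex_const; auto. Qed.

Lemma ExN_01 q n F : is_dist q -> (forall xs, 0 <= F xs <= 1) -> 0 <= ExN q n F <= 1.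
Proof.
  intros Hq H. split.
  - rewrite <- (ExN_const q n 0) by auto. apply ExN_le with (B := 1); auto.
    intros xs _; rewrite Rabs_R0; lra. intros xs _; apply Rabs_le; specialize (H xs); lra.
    intros xs _; apply H.
  - apply Rle_trans with (ExN q n (fun _ => 1)); [|rewrite ExN_const; auto; lra].
    apply ExN_le with (B := 1); auto.
    intros xs _; apply Rabs_le; specialize (H xs); lra. intros xs _; rewrite Rabs_R1; lra.
    intros xs _; apply H.
Qed.

Section Alg.
Variables (p : nat -> R) (Inv : nat -> bool) (L : R -> R) (Q : list (nat -> R)) (xstar : nat)
  (eps1 eps2 alpha M : R) (n2 : nat).
Hypothesis Hp : is_dist p.
Hypothesis HM : 0 < M.
Hypothesis He1 : 0 < eps1.
Hypothesis HLb : forall t, 0 <= t <= 1 -> 0 <= L t <= M.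
Hypothesis HLd : nonincreasing01 L.
Hypothesis HLc : convex01 L.
Hypothesis HQ : forall q, In q Q -> is_dist q.

Lemma inner_bounds fuel l : forall D rest, (forall q, In q D -> In q Q) -> 0 <= rest <= 1 ->
  0 <= pbad_inner p Inv L xstar eps1 eps2 alpha M n2 fuel l D rest <= 1.
Proof.
  induction fuel; intros D rest HD Hr; simpl. lra.
  destruct D as [|d D']. auto.
  apply ExN_01. apply mu_dist. congruence. intros; apply HQ, HD; auto.
  intros xs. destruct Rle_dec. unfold bad_output. apply ltR_01.
  apply IHfuel; auto. intros q Hq. unfold remove_step in Hq. apply filter_In in Hq. apply HD, Hq.
Qed.

Lemma outer_bounds fuel s1 ls : 0 <= pbad_outer p Inv L Q xstar eps1 eps2 alpha M n2 fuel s1 ls <= 1.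
Proof.
  induction ls; simpl. lra. apply inner_bounds; auto.
  intros q Hq. apply filter_In in Hq; apply Hq.
Qed.

Definition good (s1 : list nat) := forall q, In q Q -> Loss p L q <= emp_loss L s1 q + eps1 / 3.

Lemma inner_zero s1 (G : good s1) fuel l : forall D rest,
  (forall q, In q D -> In q Q /\ emp_loss L s1 q <= l) -> rest = 0 ->
  pbad_inner p Inv L xstar eps1 eps2 alpha M n2 fuel l D rest = 0.
Proof.
  induction fuel; intros D rest HD Hr; simpl. auto.
  destruct D as [|d D']. auto.
  rewrite <- (ExN_zero (mu (d :: D')) n2). apply ExN_ext. intros xs _.
  destruct Rle_dec.
  - unfold bad_output, ltR. destruct Rlt_dec; auto. exfalso.
    assert (Loss p L (mu' eps1 M (d :: D') xstar) <= l + 2 * eps1 / 3); [|lra].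
    apply loss_mu'; auto. congruence. intros q Hq; apply HQ, HD; auto.
    intros q Hq. destruct (HD q Hq). specialize (G q H). lra.
  - apply IHfuel; auto. intros q Hq. unfold remove_step in Hq. apply filter_In in Hq. apply HD, Hq.
Qed.

Lemma outer_zero s1 (G : good s1) fuel ls : pbad_outer p Inv L Q xstar eps1 eps2 alpha M n2 fuel s1 ls = 0.
Proof.
  induction ls; simpl. auto. apply (inner_zero s1 G); auto.
  intros q Hq. apply filter_In in Hq. destruct Hq as [H1 H2]. split; auto.
  destruct Rle_dec; auto; discriminate.
Qed.

Definition indq (s1 : list nat) (q : nat -> R) := ltR (emp_loss L s1 q) (Loss p L q - eps1 / 3).

Lemma rsum_nonneg {A} (l : list A) f : (forall b, In b l -> 0 <= f b) -> 0 <= rsum (map f l).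
Proof. intros H. pose proof (rsum_le l (fun _ => 0) f H). rewrite rsum_const in H0. lra. Qed.

Lemma rsum_ge_term {A} (l : list A) f a : (forall b, In b l -> 0 <= f b) -> In a l -> f a <= rsum (map f l).
Proof.
  induction l; intros H Ha; [destruct Ha|]. cbn [map]. change (rsum (f a0 :: map f l)) with (f a0 + rsum (map f l)).
  destruct Ha as [<-|Ha].
  - assert (0 <= rsum (map f l)) by (apply rsum_nonneg; intros; apply H; simpl; auto). lra.
  - pose proof (H a0 (or_introl eq_refl)). assert (f a <= rsum (map f l)) by (apply IHl; auto; intros; apply H; simpl; auto). lra.
Qed.

Lemma outer_le_ind fuel s1 ls : pbad_outer p Inv L Q xstar eps1 eps2 alpha M n2 fuel s1 ls <= rsum (map (indq s1) Q).
Proof.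
  assert (Hn : forall b, In b Q -> 0 <= indq s1 b) by (intros; apply ltR_01).
  destruct (classic (good s1)) as [G|NG].
  - rewrite (outer_zero s1 G). apply rsum_nonneg; auto.
  - apply not_all_ex_not in NG. destruct NG as [q Hq].
    assert (In q Q /\ emp_loss L s1 q < Loss p L q - eps1 / 3) as [HqQ Hlt].
    { destruct (classic (In q Q)) as [H|H]. split; auto. apply Rnot_le_lt. intros C; apply Hq; intros; lra.
      exfalso; apply Hq; intros; contradiction. }
    apply Rle_trans with (indq s1 q). unfold indq, ltR. destruct Rlt_dec; [|lra]. apply outer_bounds.
    apply rsum_ge_term; auto.
Qed.
End Alg.

Lemma exp_le_exp x y : x <= y -> exp x <= exp y.
Proof. intros [H|H]. left; apply exp_increasing; auto. subst; lra. Qed.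

Lemma exp_pow x n : exp (INR n * x) = exp x ^ n.
Proof.
  induction n. simpl. rewrite Rmult_0_l, exp_0; auto.
  rewrite S_INR, Rmult_plus_distr_r, Rmult_1_l, exp_plus, IHn. simpl. ring.
Qed.

Lemma exp_quad z : Rabs z <= 1/2 -> exp z <= 1 + z + 2 * z ^ 2.
Proof.
  intros Hz. apply Rabs_le_inv in Hz.
  pose proof (exp_ineq1_le (- z)) as H. rewrite exp_Ropp in H.
  pose proof (exp_pos z) as Hp.
  assert (H1 : exp z * (1 - z) <= 1).
  { apply Rmult_le_reg_l with (/ exp z). apply Rinv_0_lt_compat; auto.
    rewrite <- Rmult_assoc, Rinv_l, Rmult_1_l, Rmult_1_r by lra. lra. }
  assert (H2 : 1 <= (1 + z + 2 * z ^ 2) * (1 - z)).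
  { simpl. assert (0 <= z * z * (1 - 2 * z)) by (apply Rmult_le_pos; nra). nra. }
  apply Rmult_le_reg_r with (1 - z). lra.
  nra.
Qed.

Lemma exp_rsum lam (h : nat -> R) xs :
  exp (lam * rsum (map h xs)) = prodl (fun x => exp (lam * h x)) xs.
Proof.
  induction xs; simpl. rewrite Rmult_0_r, exp_0; auto.
  change (rsum (h a :: map h xs)) with (h a + rsum (map h xs)).
  rewrite Rmult_plus_distr_l, exp_plus, IHxs. auto.
Qed.

Section Ch.
Variables (p : nat -> R) (L : R -> R) (M : R) (q : nat -> R).
Hypothesis Hp : is_dist p.
Hypothesis Hq : is_dist q.
Hypothesis HM : 0 < M.
Hypothesis HLb : forall t, 0 <= t <= 1 -> 0 <= L t <= M.

Let Y x := L (q x).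
Let a := Loss p L q.

Lemma Y_b x : 0 <= Y x <= M.
Proof. apply HLb, dist_le1; auto. Qed.

Lemma a_b : 0 <= a <= M.
Proof.
  unfold a, Loss. split.
  - rewrite <- (Ex_const p 0) by auto. apply Ex_le with (B := M); auto.
    intros; rewrite Rabs_R0; lra. intros x; pose proof (Y_b x); apply Rabs_le; unfold Y in *; lra.
    intros x; apply (Y_b x).
  - apply Rle_trans with (Ex p (fun _ => M)); [|rewrite Ex_const; auto; lra].
    apply Ex_le with (B := M); auto.
    intros x; pose proof (Y_b x); apply Rabs_le; unfold Y in *; lra.
    intros; rewrite Rabs_right; lra. intros x; apply (Y_b x).
Qed.

Lemma chernoff (t lam : R) (n : nat) : 0 < t -> 0 <= lam -> lam * M <= 1/2 -> 0 < INR n ->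
  ExN p n (fun s1 => ltR (emp_loss L s1 q) (a - t)) <= exp (- lam * INR n * t + INR n * (2 * lam ^ 2 * M ^ 2)).
Proof.
  intros Ht Hl HlM Hn.
  pose proof a_b as Ha.
  set (F := fun xs : list nat => exp (lam * (rsum (map (fun x => a - Y x) xs) - INR n * t))).
  assert (Hrs : forall xs, rsum (map (fun x => a - Y x) xs) = a * INR (length xs) - rsum (map Y xs)).
  { intros xs. rewrite (map_ext (fun x => a - Y x) (fun x => (-1) * Y x + a)) by (intros; ring).
    rewrite rsum_lin. ring. }
  assert (HF : BdN n F (1 + exp (lam * INR n * M))).
  { intros xs Hlen. unfold F. rewrite Rabs_right by (left; apply exp_pos).
    assert (exp (lam * (rsum (map (fun x => a - Y x) xs) - INR n * t)) <= exp (lam * INR n * M)); [|lra].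
    apply exp_le_exp.
    pose proof (rsum_bounds xs (fun x => a - Y x) (-M) M) as Hb.
    assert (Hb' : - M * INR (length xs) <= rsum (map (fun x => a - Y x) xs) <= M * INR (length xs)).
    { apply Hb. intros x _. pose proof (Y_b x). lra. }
    rewrite Hlen in Hb'. assert (0 <= lam * (INR n * t)) by (apply Rmult_le_pos; nra). nra. }
  apply Rle_trans with (ExN p n F).
  - apply ExN_le with (B := 1 + exp (lam * INR n * M)); auto.
    + intros xs _. pose proof (ltR_01 (emp_loss L xs q) (a - t)). pose proof (exp_pos (lam * INR n * M)).
      apply Rabs_le. lra.
    + intros xs Hlen. unfold ltR. destruct Rlt_dec as [r|r].
      * unfold F. eapply Rle_trans; [|apply exp_ineq1_le].
        unfold emp_loss, emp_avg in r. rewrite Hlen in r. fold Y in r.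
        rewrite Hrs, Hlen.
        assert (rsum (map Y xs) < INR n * (a - t)).
        { apply Rmult_lt_reg_r with (/ INR n). apply Rinv_0_lt_compat; auto.
          replace (INR n * (a - t) * / INR n) with (a - t) by (field; lra). exact r. }
        assert (0 <= lam * (a * INR n - rsum (map Y xs) - INR n * t)) by (apply Rmult_le_pos; nra). lra.
      * unfold F. left; apply exp_pos.
  - set (g := fun x => exp (lam * (a - Y x))).
    assert (Hg : forall x, Rabs (g x) <= exp (lam * M)).
    { intros x. unfold g. rewrite Rabs_right by (left; apply exp_pos). apply exp_le_exp.
      pose proof (Y_b x). nra. }
    rewrite (ExN_ext p n F (fun xs => exp (- lam * INR n * t) * prodl g xs)).
    2:{ intros xs _. unfold F, g. rewrite <- exp_rsum.
        rewrite <- exp_plus. f_equal. ring. }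
    rewrite (ExN_prod p g _ Hp Hg).
    assert (HE : 0 <= Ex p g <= 1 + 2 * lam ^ 2 * M ^ 2).
    { split.
      - rewrite <- (Ex_const p 0) by auto. apply Ex_le with (B := exp (lam * M)); auto.
        intros; rewrite Rabs_R0; left; apply exp_pos. intros; unfold g; left; apply exp_pos.
      - apply Rle_trans with (Ex p (fun x => (1 + lam * a + 2 * lam ^ 2 * M ^ 2) + (- lam) * Y x)).
        + apply Ex_le with (B := exp (lam * M) + (1 + lam * M + 2 * lam ^ 2 * M ^ 2) + lam * M); auto.
          * intros x. eapply Rle_trans; [apply Hg|]. assert (0 <= lam * M) by nra.
            assert (0 <= 2 * lam ^ 2 * M ^ 2) by (simpl; nra). lra.
          * intros x. pose proof (Y_b x). apply Rabs_le. pose proof (exp_pos (lam * M)).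
            assert (0 <= lam * M) by nra. assert (0 <= lam * Y x <= lam * M) by nra.
            assert (0 <= 2 * lam ^ 2 * M ^ 2) by (simpl; nra). assert (lam * a <= lam * M) by nra. nra.
          * intros x. unfold g. pose proof (Y_b x).
            assert (Hz : Rabs (lam * (a - Y x)) <= 1/2).
            { rewrite Rabs_mult, Rabs_right by lra. apply Rle_trans with (lam * M); auto.
              apply Rmult_le_compat_l; auto. apply Rabs_le; lra. }
            eapply Rle_trans; [apply exp_quad; auto|].
            assert ((lam * (a - Y x)) ^ 2 <= lam ^ 2 * M ^ 2).
            { rewrite <- Rpow_mult_distr. apply pow_maj_Rabs. rewrite Rabs_mult, Rabs_right by lra.
              apply Rmult_le_compat_l; auto. apply Rabs_le; lra. }
            lra.
        + rewrite (Ex_plus p (fun _ => 1 + lam * a + 2 * lam ^ 2 * M ^ 2) (fun x => - lam * Y x) (Rabs (1 + lam * a + 2 * lam ^ 2 * M ^ 2) + lam * M)); auto.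
          * rewrite Ex_const, (Ex_scal p Y (- lam) M); auto.
            -- change (Ex p Y) with a. lra.
            -- intros x; pose proof (Y_b x); apply Rabs_le; lra.
          * intros x. assert (0 <= lam * M) by nra. lra.
          * intros x. pose proof (Y_b x). rewrite Rabs_mult, Rabs_Ropp, (Rabs_right lam), (Rabs_right (Y x)) by lra.
            assert (0 <= Rabs (1 + lam * a + 2 * lam ^ 2 * M ^ 2)) by apply Rabs_pos. nra. }
    rewrite exp_plus. apply Rmult_le_compat_l. left; apply exp_pos.
    rewrite exp_pow. apply pow_incr. split. lra.
    eapply Rle_trans. apply HE. apply exp_ineq1_le.
Qed.
End Ch.

Lemma ceilN_ge r : 0 < r -> r <= INR (ceilN r).
Proof.
  intros Hr. unfold ceilN. destruct (archimed r) as [H1 H2].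
  assert (Hz : (0 <= up r)%Z). { apply le_IZR. lra. }
  rewrite INR_IZR_INZ, Z2Nat.id by auto. lra.
Qed.

Theorem lemma5 :
  exists C1 C2 : R, 0 < C1 /\ 0 < C2 /\
  forall (p : nat -> R) (Inv : nat -> bool) (M : R) (L : R -> R)
         (Q : list (nat -> R)) (xstar : nat) (eps1 eps2 alpha : R),
    is_dist p ->
    (forall x, 0 < p x -> Inv x = false) ->
    0 < M ->
    (forall t, 0 <= t <= 1 -> 0 <= L t <= M) ->
    nonincreasing01 L ->
    convex01 L ->
    (forall q, In q Q -> is_dist q) ->
    (2 <= length Q)%nat ->
    Inv xstar = false ->
    0 < eps1 -> 0 < eps2 ->
    let K := INR (length Q) in
    let n1 := ceilN (C1 * (M ^ 2 / eps1 ^ 2) * ln K) in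
    let n2 := ceilN (C2 * (M ^ 2 / (eps1 ^ 2 * eps2 ^ 2)) * ln K
                        * Rmax 1 (ln (M * ln K / (eps1 * eps2)))) in
    forall fuel : nat,
      prob_bad p Inv L Q xstar eps1 eps2 alpha M n1 n2 fuel <= 1 / 15.
Proof.
  exists 360, 1. split. lra. split. lra.
  intros p Inv M L Q xstar eps1 eps2 alpha Hp HInv HM HLb HLd HLc HQ HQ2 Hx He1 He2 K n1 n2 fuel.
  assert (HK : 2 <= K). { unfold K. apply (le_INR 2) in HQ2. simpl in HQ2. lra. }
  assert (HlnK : 0 < ln K). { rewrite <- ln_1. apply ln_increasing; lra. }
  assert (Hn1 : 360 * (M ^ 2 / eps1 ^ 2) * ln K <= INR n1).
  { apply ceilN_ge. apply Rmult_lt_0_compat; auto. apply Rmult_lt_0_compat. lra.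
    apply Rdiv_lt_0_compat; apply pow_lt; auto. }
  assert (Hn1p : 0 < INR n1).
  { eapply Rlt_le_trans; [|exact Hn1]. apply Rmult_lt_0_compat; auto. apply Rmult_lt_0_compat. lra.
    apply Rdiv_lt_0_compat; apply pow_lt; auto. }
  unfold prob_bad.
  destruct (Rle_lt_dec (3 * M) eps1) as [Hbig|Hsmall].
  - apply Rle_trans with (ExN p n1 (fun _ => 0)); [|rewrite ExN_zero; lra].
    apply ExN_le with (B := 1); auto.
    + intros xs _. pose proof (outer_bounds p Inv L Q xstar eps1 eps2 alpha M n2 HQ fuel xs (levels eps1 M)).
      apply Rabs_le. lra.
    + intros xs _. rewrite Rabs_R0; lra.
    + intros xs Hl. right. apply outer_zero; auto.
      intros q Hq. pose proof (a_b p L M q Hp (HQ q Hq) HM HLb).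
      assert (0 <= emp_loss L xs q).
      { unfold emp_loss, emp_avg. rewrite Hl. apply Rmult_le_pos.
        apply rsum_nonneg. intros; apply HLb, dist_le1; auto. left; apply Rinv_0_lt_compat; auto. }
      lra.
  - set (E := exp (- (INR n1 * eps1 ^ 2 / (72 * M ^ 2)))).
    assert (HKn : 0 <= K) by lra.
    apply Rle_trans with (ExN p n1 (fun s1 => rsum (map (fun q => indq p L eps1 s1 q) Q))).
    { apply ExN_le with (B := K); auto.
      + intros xs _. pose proof (outer_bounds p Inv L Q xstar eps1 eps2 alpha M n2 HQ fuel xs (levels eps1 M)).
        apply Rabs_le. lra.
      + intros xs _. apply Rabs_le. pose proof (rsum_bounds Q (fun q => indq p L eps1 xs q) 0 1) as Hb.
        assert (0 * K <= rsum (map (fun q => indq p L eps1 xs q) Q) <= 1 * K) by (apply Hb; intros; apply ltR_01).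
        lra.
      + intros xs _. apply outer_le_ind; auto. }
    rewrite (ExN_rsum p n1 Q (fun q s1 => indq p L eps1 s1 q) 1); auto.
    2:{ intros q _ xs _. apply Rabs_le. pose proof (ltR_01 (emp_loss L xs q) (Loss p L q - eps1 / 3)). unfold indq. lra. }
    apply Rle_trans with (rsum (map (fun _ => E) Q)).
    { apply rsum_le. intros q Hq. unfold indq.
      pose proof (chernoff p L M q Hp (HQ q Hq) HM HLb (eps1 / 3) (eps1 / (12 * M ^ 2)) n1) as Hc.
      eapply Rle_trans. apply Hc; auto. lra.
      left; apply Rdiv_lt_0_compat. lra. apply Rmult_lt_0_compat. lra. apply pow_lt; auto.
      replace (eps1 / (12 * M ^ 2) * M) with (eps1 / (12 * M)) by (field; lra).
      apply Rmult_le_reg_r with (12 * M). lra. unfold Rdiv. rewrite Rmult_assoc, Rinv_l by lra. lra.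
      right. unfold E. f_equal. field. lra. }
    rewrite rsum_const. fold K.
    assert (HE : E <= exp (- (5 * ln K))).
    { unfold E. apply exp_le_exp. apply Ropp_le_contravar.
      apply Rle_trans with (360 * (M ^ 2 / eps1 ^ 2) * ln K * eps1 ^ 2 / (72 * M ^ 2)).
      right. field. repeat split; lra.
      unfold Rdiv. apply Rmult_le_compat_r. left; apply Rinv_0_lt_compat. apply Rmult_lt_0_compat. lra. apply pow_lt; auto.
      apply Rmult_le_compat_r. left; apply pow_lt; auto. exact Hn1. }
    assert (HK4 : exp (4 * ln K) = K ^ 4).
    { replace 4 with (INR 4) by (simpl; ring). rewrite exp_pow, exp_ln by lra. reflexivity. }
    assert (H16 : 16 <= K ^ 4).
    { replace 16 with (2 ^ 4) by ring. apply pow_incr. lra. }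
    apply Rle_trans with (exp (- (5 * ln K)) * K).
    apply Rmult_le_compat_r; lra.
    replace K with (exp (ln K)) at 2 by (apply exp_ln; lra).
    rewrite <- exp_plus. replace (- (5 * ln K) + ln K) with (- (4 * ln K)) by ring.
    rewrite exp_Ropp, HK4.
    apply Rmult_le_reg_r with (K ^ 4). lra. rewrite Rinv_l by lra. lra.
Qed.
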